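(* Let $k\geq 1$ be a fixed integer, $p=\frac{\log n+(k+1)\log\log n-\log\log\log n}{n}$, $G=G(n,p)$ and $D=\frac{\log n}{\log\log n}$. For a fixed $t\in\mathbb{N}$ and a fixed $0<\alpha<1$, almost surely there does not exist a subset $S\subset V(G)$ with $|S|\leq \alpha tD$ and $e[S]\geq |S|+t$.
   Context: $\log$ is the natural logarithm; $G(n,p)$ is the binomial random graph on $n$ vertices, $n\to\infty$; ''almost surely'' means with probability tending to $1$; $e[S]$ denotes the number of edges of the subgraph of $G$ induced by $S$. *)

(* Defs.v *)
From HB Require Import structures.
From mathcomp Require Import all_boot all_order all_algebra.
From mathcomp Require Import all_classical all_reals all_analysis.
Set Implicit Arguments. Unset Strict Implicit. Unset Printing Implicit Defensive.
Import Order.TTheory GRing.Theory Num.Theory.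
Local Open Scope ring_scope.

(* Possible edges of a simple graph on vertex set 'I_n: pairs (i,j) with i < j. *)
Definition pairs (n : nat) : {set 'I_n * 'I_n} := [set e : 'I_n * 'I_n | (val e.1 < val e.2)%N].

(* A graph on 'I_n is an edge set G \subset pairs n (i.e. G \in powerset (pairs n)). *)
Definition eS (n : nat) (G : {set 'I_n * 'I_n}) (S : {set 'I_n}) : nat :=
  #|[set e in G | (e.1 \in S) && (e.2 \in S)]|.

(* Probability in G(n,p) of the graph property P: each of the C(n,2) possible
   edges is present independently with probability p. *)
Definition gnp_prob (R : realType) (n : nat) (p : R)
  (P : {set 'I_n * 'I_n} -> bool) : R :=
  \sum_(G in powerset (pairs n) | P G)
     p ^+ #|G| * (1 - p) ^+ (#|pairs n| - #|G|).

Definition p_k (R : realType) (k n : nat) : R :=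
  (ln (n%:R : R) + (k.+1)%:R * ln (ln (n%:R : R)) - ln (ln (ln (n%:R : R))))
    / n%:R.

Definition Dn (R : realType) (n : nat) : R := ln (n%:R : R) / ln (ln (n%:R : R)).

Definition bad (R : realType) (alpha : R) (t n : nat)
  (G : {set 'I_n * 'I_n}) : bool :=
  [exists S : {set 'I_n},
     ((#|S|%:R : R) <= alpha * t%:R * Dn R n) && (#|S| + t <= eS G S)%N].

(* Main.v *)
Require Import Defs.
From HB Require Import structures.
From mathcomp Require Import all_boot all_order all_algebra.
From mathcomp Require Import all_classical all_reals all_analysis.
From mathcomp Require Import zify ring lra.
Import Order.TTheory GRing.Theory Num.Theory numFieldNormedType.Exports.
Local Open Scope classical_set_scope.
Local Open Scope ring_scope.

Section Comb.
Variable R : realType.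

Lemma sum_card (T : finType) (B : {set T}) (f : nat -> R) :
  \sum_(H : {set T} | H \subset B) f #|H| =
  \sum_(k < #|B|.+1) 'C(#|B|, k)%:R * f k.
Proof.
rewrite (partition_big (fun H : {set T} => (inord #|H| : 'I_#|B|.+1)) predT) //=.
apply: eq_bigr => k _.
rewrite (eq_bigr (fun _ => f k)); last first.
  move=> H /andP[sHB /eqP <-]; rewrite inordK // ltnS; exact: subset_leq_card.
rewrite sumr_const -(cards_draws B k) mulr_natl; congr (_ *+ _).
apply: eq_card => H; rewrite !inE -topredE /=.
case sHB: (H \subset B) => //=.
apply/eqP/eqP => [<-|Hk].
  by rewrite inordK // ltnS subset_leq_card.
by apply: val_inj; rewrite /= inordK // Hk.
Qed.

Lemma sum_subsets_binom (T : finType) (B : {set T}) (p q : R) :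
  \sum_(H : {set T} | H \subset B) p ^+ #|H| * q ^+ (#|B| - #|H|) = (p + q) ^+ #|B|.
Proof.
rewrite (@sum_card T B (fun j => p ^+ j * q ^+ (#|B| - j))) addrC exprDn.
by apply: eq_bigr => i _; rewrite mulr_natl mulrC.
Qed.

Lemma supersets (T : finType) (A F : {set T}) (p : R) : F \subset A ->
  \sum_(G : {set T} | (G \subset A) && (F \subset G)) p ^+ #|G| * (1 - p) ^+ (#|A| - #|G|)
  = p ^+ #|F|.
Proof.
move=> sFA.
rewrite (reindex_onto (fun H => H :|: F) (fun G => G :\: F)); last first.
  move=> G /andP[_ sFG]; apply/setP => x; rewrite !inE.
  case xF: (x \in F) => /=; last by rewrite orbF.
  by rewrite (fintype.subsetP sFG x xF).
rewrite (eq_bigl (fun H : {set T} => H \subset A :\: F)); last first.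
  move=> H; apply/idP/idP.
    move=> /andP[/andP[sHFA _] /eqP eH]; apply/fintype.subsetP => x xH.
    have: x \in (H :|: F) :\: F by rewrite eH.
    rewrite !inE => /andP[-> xHF] /=; apply: (fintype.subsetP sHFA); by rewrite inE.
  move=> sH; have dHF: forall x, x \in H -> x \notin F.
    by move=> x /(fintype.subsetP sH); rewrite inE => /andP[].
  apply/andP; split; [apply/andP; split|].
  - rewrite finset.subUset sFA andbT; apply: (fintype.subset_trans sH); exact: finset.subsetDl.
  - exact: finset.subsetUr.
  apply/eqP/setP => x; rewrite !inE.
  case xF: (x \in F) => /=; last by rewrite orbF.
  by apply/esym/negbTE/negP => xH; move: (dHF x xH); rewrite xF.
have cardD : #|A :\: F| = (#|A| - #|F|)%N.
  by rewrite cardsD (finset.setIidPr sFA).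
have key : forall H : {set T}, H \subset A :\: F -> #|H :|: F| = (#|H| + #|F|)%N.
  move=> H sH; rewrite cardsU.
  suff -> : H :&: F = finset.set0 by rewrite cards0 subn0.
  apply/setP => x; rewrite !inE; apply/negbTE/andP => -[xH xF].
  by move: (fintype.subsetP sH x xH); rewrite inE xF.
rewrite (eq_bigr (fun H : {set T} => p ^+ #|F| * (p ^+ #|H| * (1 - p) ^+ (#|A :\: F| - #|H|)))); last first.
  move=> H sH; rewrite key // exprD cardD.
  have -> : (#|A| - (#|H| + #|F|) = #|A| - #|F| - #|H|)%N by lia.
  ring.
by rewrite -mulr_sumr sum_subsets_binom addrC subrK expr1n mulr1.
Qed.

Definition ES (n : nat) (S : {set 'I_n}) : {set 'I_n * 'I_n} :=
  [set e in pairs n | (e.1 \in S) && (e.2 \in S)].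
Arguments ES {n}.

Lemma union_bound (n t : nat) (p : R) (P : pred {set 'I_n}) : 0 <= p -> p <= 1 ->
  gnp_prob p (fun G => [exists S, P S && (#|S| + t <= eS G S)%N]) <=
  \sum_(S | P S) 'C(#|S| * #|S|, #|S| + t)%:R * p ^+ (#|S| + t).
Proof.
move=> p0 p1; rewrite /gnp_prob.
set A := pairs n.
set w := fun G : {set 'I_n * 'I_n} => p ^+ #|G| * (1 - p) ^+ (#|A| - #|G|).
have w0 : forall G, 0 <= w G.
  by move=> G; rewrite /w mulr_ge0 // exprn_ge0 // subr_ge0.
have step : (\sum_(G in powerset A | [exists S, P S && (#|S| + t <= eS G S)%N]) w G <= (\sum_(G in powerset A) \sum_(S | P S)
   \sum_(F : {set 'I_n * 'I_n} | (F \subset ES S) && (#|F| == #|S| + t)%N)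
      (F \subset G)%:R * w G)).
  rewrite big_mkcondr /=; apply: ler_sum => G GA.
  case: ifP => [/existsP[S /andP[PS HS]]|_]; last first.
    by apply: sumr_ge0 => S _; apply: sumr_ge0 => F _; rewrite mulr_ge0.
  set B := [set e in G | (e.1 \in S) && (e.2 \in S)].
  have : (0 < #|[set F : {set _} | F \subset B & #|F| == #|S| + t]|)%N.
    by rewrite cards_draws bin_gt0.
  move=> /card_gt0P[F]; rewrite inE => /andP[sFB /eqP cF].
  have sBE : B \subset ES S.
    apply/fintype.subsetP => e; rewrite !inE => /andP[eG ->]; rewrite andbT.
    by move: GA; rewrite powersetE => /fintype.subsetP /(_ e eG); rewrite inE.
  have sBG : B \subset G.
    by apply/fintype.subsetP => e; rewrite !inE => /andP[].
  rewrite (bigD1 S) //= (bigD1 F) /=; last by rewrite (fintype.subset_trans sFB sBE) cF eqxx.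
  rewrite (fintype.subset_trans sFB sBG) mul1r -addrA lerDl.
  by rewrite addr_ge0 //; apply: sumr_ge0 => ? _; [|apply: sumr_ge0 => ? _]; rewrite mulr_ge0.
apply: (le_trans step).
rewrite exchange_big /=; apply: ler_sum => S PS.
rewrite exchange_big /=.
rewrite (eq_bigr (fun F => p ^+ (#|S| + t))); last first.
  move=> F /andP[sFE /eqP cF].
  transitivity (\sum_(G in powerset A | F \subset G) w G).
    rewrite big_mkcondr /=; apply: eq_bigr => G _.
    by case: (F \subset G); rewrite ?mul1r ?mul0r.
  rewrite -cF.
  rewrite -(@supersets _ A F p); last first.
    apply: (fintype.subset_trans sFE); apply/fintype.subsetP => e; rewrite inE.
    by case/andP.
  by apply: eq_bigl => G; rewrite powersetE.
rewrite sumr_const.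
have -> : #|[pred F : {set 'I_n * 'I_n} | (F \subset ES S) && (#|F| == #|S| + t)%N]|
   = 'C(#|ES S|, #|S| + t).
  rewrite -cards_draws; apply: eq_card => F; rewrite !inE /=.
  by [].
rewrite -(mulr_natl (p ^+ _)); apply: ler_pM => //; first exact: exprn_ge0.
rewrite ler_nat leq_bin2l //.
rewrite -cardsX; apply: subset_leq_card; apply/fintype.subsetP => e.
by rewrite !inE => /andP[_ /andP[-> ->]].
Qed.


Lemma ffact_le_exp (m n : nat) : (n ^_ m <= n ^ m)%N.
Proof.
elim: m n => [|m IH] n; first by rewrite ffactn0.
rewrite ffactnS expnS leq_mul //; apply: (leq_trans (IH _)).
case: m {IH} => [|m]; first by rewrite !expn0.
by rewrite leq_exp2r // leq_pred.
Qed.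

Lemma pow_fact (m : nat) : (0 < m)%N -> m%:R ^+ m <= m`!%:R * expR (1 : R) ^+ m.
Proof.
case: m => [//|m] _.
have := expR_ge1Dxn (x := (m.+1%:R : R)) m (ler0n _ _).
rewrite -expRM_natl mulr1 => H.
have H2 : m.+1%:R ^+ m.+1 / (m.+1)`!%:R <= expR (m.+1%:R : R).
  by apply: le_trans H; rewrite lerDr.
by rewrite mulrC -ler_pdivrMr ?ltr0n ?fact_gt0.
Qed.

Lemma term_bound (n s t : nat) (p : R) : 0 <= p -> (0 < t)%N ->
  'C(n, s)%:R * ('C(s * s, s + t)%:R * p ^+ (s + t)) <=
  (expR 1 ^+ 2 * n%:R * p) ^+ s * (expR 1 * s%:R * p) ^+ t.
Proof.
move=> p0 t0; set e := expR (1 : R).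
have e0 : 0 < e by apply: expR_gt0.
case: s => [|s].
  rewrite mul0n add0n bin0n eqn0Ngt t0 /= mul0r mulr0.
  by rewrite mulr_ge0 // exprn_ge0 // ?mulr_ge0 // ?exprn_ge0 // ?ltW.
set m := s.+1.
have m0 : (0 < m)%N by [].
have h1 : 'C(n, m)%:R * m`!%:R <= n%:R ^+ m :> R.
  by rewrite -natrM -natrX ler_nat bin_ffact ffact_le_exp.
have h2 : 'C(m * m, m + t)%:R * (m + t)`!%:R <= (m * m)%:R ^+ (m + t) :> R.
  by rewrite -natrM -natrX ler_nat bin_ffact ffact_le_exp.
have h3 := @pow_fact m m0.
have h4 : m%:R ^+ (m + t) <= (m + t)`!%:R * e ^+ (m + t).
  apply: le_trans (@pow_fact (m + t) _); last by rewrite addn_gt0 m0.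
  by rewrite -!natrX ler_nat leq_exp2r ?addn_gt0 ?m0 // leq_addr.
have mpos : 0 < (m%:R : R) ^+ m * m%:R ^+ (m + t).
  by rewrite mulr_gt0 // exprn_gt0 // ltr0n.
rewrite -(ler_pM2r mpos).
set a := 'C(n, m)%:R; set b := 'C(m * m, m + t)%:R.
have a0 : 0 <= a :> R by rewrite ler0n.
have b0 : 0 <= b :> R by rewrite ler0n.
apply: (@le_trans _ _ ((a * m`!%:R) * (b * (m + t)`!%:R) * (e ^+ m * e ^+ (m + t) * p ^+ (m + t)))).
  have -> : a * (b * p ^+ (m + t)) * (m%:R ^+ m * m%:R ^+ (m + t)) =
     (a * m%:R ^+ m) * (b * m%:R ^+ (m + t)) * p ^+ (m + t) by ring.
  have -> : a * m`!%:R * (b * (m + t)`!%:R) * (e ^+ m * e ^+ (m + t) * p ^+ (m + t)) =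
     (a * (m`!%:R * e ^+ m)) * (b * ((m + t)`!%:R * e ^+ (m + t))) * p ^+ (m + t) by ring.
  apply: ler_wpM2r; first exact: exprn_ge0.
  apply: ler_pM.
  - by rewrite mulr_ge0 // exprn_ge0 // ler0n.
  - by rewrite mulr_ge0 // exprn_ge0 // ler0n.
  - by apply: ler_wpM2l.
  - by apply: ler_wpM2l.
apply: (@le_trans _ _ (n%:R ^+ m * (m * m)%:R ^+ (m + t) * (e ^+ m * e ^+ (m + t) * p ^+ (m + t)))).
  apply: ler_wpM2r; first by rewrite !mulr_ge0 // exprn_ge0 // ltW.
  apply: ler_pM => //; by rewrite mulr_ge0 // ler0n.
rewrite natrM !exprMn !exprD le_eqVlt; apply/orP; left; apply/eqP; ring.
Qed.

Lemma group_card (n : nat) (P : pred nat) (g : nat -> R) :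
  \sum_(S : {set 'I_n} | P #|S|) g #|S| =
  \sum_(k < n.+1) 'C(n, k)%:R * (if P k then g k else 0).
Proof.
transitivity (\sum_(S : {set 'I_n} | S \subset [set: 'I_n]%SET)
   (fun j => if P j then g j else 0) #|S|).
  rewrite big_mkcond [in RHS]big_mkcond /=; apply: eq_bigr => S _.
  have -> : S \subset [set: 'I_n]%SET by apply/fintype.subsetP => x; rewrite inE.
  by [].
by rewrite (@sum_card _ [set: 'I_n]%SET (fun j => if P j then g j else 0)) cardsT card_ord.
Qed.

Lemma count_le (N T : nat) (c : R) :
  \sum_(k < N) (if (k <= T)%N then c else 0) = c *+ minn N T.+1.
Proof.
elim: N => [|N IH]; first by rewrite big_ord0.
rewrite big_ord_recr /= IH.
case: (leqP N T) => HN.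
  have -> : minn N.+1 T.+1 = (minn N T.+1).+1 by lia.
  by rewrite mulrS addrC.
have -> : minn N.+1 T.+1 = minn N T.+1 by lia.
by rewrite addr0.
Qed.

Lemma comb_bound (n t : nat) (p X : R) : 0 <= p -> p <= 1 -> (0 < t)%N -> 0 <= X ->
  1 <= expR 1 ^+ 2 * n%:R * p ->
  gnp_prob p (fun G => [exists S : {set 'I_n}, ((#|S|%:R : R) <= X) && (#|S| + t <= eS G S)%N])
  <= (X + 1) * (expR (X * ln (expR 1 ^+ 2 * n%:R * p)) * (expR 1 * X * p) ^+ t).
Proof.
move=> p0 p1 t0 X0 b1.
set b := expR 1 ^+ 2 * n%:R * p.
set Bnd := expR (X * ln b) * (expR 1 * X * p) ^+ t.
have Bnd0 : 0 <= Bnd.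
  by rewrite /Bnd mulr_ge0 ?expR_ge0 // exprn_ge0 // mulr_ge0 // mulr_ge0 // expR_ge0.
apply: le_trans (@union_bound n t p (fun S : {set 'I_n} => (#|S|%:R : R) <= X) p0 p1) _.
rewrite (@group_card n (fun k => (k%:R : R) <= X)
   (fun k => 'C(k * k, k + t)%:R * p ^+ (k + t))).
apply: (@le_trans _ _ (\sum_(k < n.+1) (if (k <= Num.trunc X)%N then Bnd else 0))).
  apply: ler_sum => k _.
  case: ifP => Hk; last by rewrite mulr0 ; case: ifP.
  have Hk' : (k <= Num.trunc X)%N by rewrite truncn_ge_nat.
  rewrite Hk'; apply: le_trans (@term_bound n k t p p0 t0) _.
  apply: ler_pM.
  - by rewrite exprn_ge0 // (le_trans _ b1).
  - by rewrite exprn_ge0 // mulr_ge0 // mulr_ge0 // ?expR_ge0 // ler0n.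
  - have lb : 0 <= ln b by apply: ln_ge0.
    rewrite -[b ^+ k]lnK; last by rewrite posrE exprn_gt0 // (lt_le_trans _ b1).
    rewrite lnXn ?(lt_le_trans _ b1) // ler_expR -mulr_natl.
    by apply: ler_wpM2r.
  - apply: lerXn2r; rewrite ?nnegrE ?mulr_ge0 ?expR_ge0 ?ler0n //.
    by apply: ler_wpM2r => //; apply: ler_wpM2l => //; apply: expR_ge0.
rewrite count_le.
apply: (@le_trans _ _ (Bnd *+ (Num.trunc X).+1)).
  rewrite -(mulr_natr Bnd (minn _ _)) -(mulr_natr Bnd (_.+1)).
  by rewrite ler_wpM2l // ler_nat geq_minr.
rewrite -(mulr_natl Bnd (_.+1)); apply: ler_pM => //.
by rewrite -addn1 natrD lerD2r truncn_le.
Qed.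
End Comb.

Section Asym.
Variable R : realType.

Lemma ln_le_sub1 (x : R) : 0 < x -> ln x <= x - 1.
Proof.
move=> x0; have := expR_ge1Dx (ln x); rewrite lnK ?posrE //; lra.
Qed.

Lemma ln_le_sqrt (x : R) : 0 < x -> ln x <= 2 * Num.sqrt x.
Proof.
move=> x0.
have s0 : 0 < Num.sqrt x by rewrite sqrtr_gt0.
have -> : ln x = ln (Num.sqrt x ^+ 2) by rewrite sqr_sqrtr // ltW.
rewrite lnXn // mulr2n.
have := @ln_le_sub1 _ s0; lra.
Qed.

Lemma final_bound (k t n : nat) (alpha : R) : (0 < n)%N -> (0 < t)%N ->
  0 < alpha -> alpha < 1 ->
  4 <= ln (n%:R : R) -> 1 <= ln (ln (n%:R : R)) ->
  (k.+1)%:R * ln (ln (n%:R : R)) <= ln (n%:R : R) ->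
  t%:R <= ln (ln (n%:R : R)) ->
  12 * alpha <= (1 - alpha) * ln (ln (n%:R : R)) ->
  8 * (2 * t%:R + 1) <= (1 - alpha) * t%:R * Num.sqrt (ln (n%:R : R)) ->
  let p := p_k R k n in let X := alpha * t%:R * Dn R n in
  [/\ 0 <= p, p <= 1, 1 <= expR 1 ^+ 2 * n%:R * p &
   (X + 1) * (expR (X * ln (expR 1 ^+ 2 * n%:R * p)) * (expR 1 * X * p) ^+ t)
   <= 2 * (2 * expR 1) ^+ t * expR (- ((1 - alpha) * t%:R / 2 * ln (n%:R : R)))].
Proof.
move=> n0 t0 a0 a1 C1 C2 C3 C4 C5 C6 p X.
set N : R := n%:R.
set L := ln N; set LL := ln L.
set e := expR (1 : R).
rewrite -/N -/L -/LL in C1 C2 C3 C4 C5 C6.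
have N0 : 0 < N by rewrite ltr0n.
have NL : N = expR L by rewrite /L lnK // posrE.
have L0 : 0 < L by lra.
have LL0 : 0 < LL by lra.
have LLL0 : 0 <= ln LL by apply: ln_ge0.
have LLL1 : ln LL <= LL - 1 by apply: ln_le_sub1.
have k1 : 1 <= (k.+1)%:R :> R by rewrite ler1n.
have tt0 : 1 <= t%:R :> R by rewrite ler1n.
set np := L + (k.+1)%:R * LL - ln LL.
have pE : p = np / N by [].
have npL : L <= np.
  have : 0 <= ((k.+1)%:R - 1) * LL by rewrite mulr_ge0 //; lra.
  rewrite /np; lra.
have np2L : np <= 2 * L by rewrite /np; lra.
have NgeL : 2 * L <= N.
  have := expR_ge1Dxn 1 (ltW L0); rewrite -NL /= !factS fact0 /= => H.
  have H2 : L ^+ 2 / 2 <= N.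
    apply: le_trans H; have -> : (2 * (1 * 1))%N%:R = 2 :> R by [].
    lra.
  rewrite expr2 in H2; nra.
have N0' : N != 0 by rewrite gt_eqF.
have p0 : 0 <= p by rewrite pE divr_ge0 //; lra.
have p1 : p <= 1 by rewrite pE ler_pdivrMr //; lra.
have e2 : 2 <= e by have := expR_ge1Dx (1 : R); rewrite /e; lra.
have Np : N * p = np by rewrite pE mulrC divfK.
have bE : e ^+ 2 * N * p = e ^+ 2 * np by rewrite -mulrA Np.
rewrite /e in bE.
have b1 : 1 <= expR 1 ^+ 2 * N * p.
  by rewrite bE -/e expr2; nra.
split => //.
set b := expR 1 ^+ 2 * N * p.
have b0 : 0 < b by rewrite /b; lra.
have lnb : ln b <= 3 + LL.
  have eL : b <= e ^+ 3 * L.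
    rewrite /b bE -/e !exprS expr0 !mulr1.
    have e0 : 0 <= e * e by rewrite mulr_ge0 //; lra.
    have h1 := mulr_ge0 e0 (_ : 0 <= 2 * L - np).
    have h2 := mulr_ge0 e0 (_ : 0 <= (e - 2) * L).
    have := h1 ltac:(lra); have := h2 ltac:(rewrite mulr_ge0 //; lra).
    nra.
  have := ler_ln (x := b) (y := e ^+ 3 * L); rewrite !posrE => H.
  have : ln b <= ln (e ^+ 3 * L).
    by rewrite H // mulr_gt0 // exprn_gt0 // expR_gt0.
  rewrite lnM ?posrE ?exprn_gt0 ?expR_gt0 // lnXn ?expR_gt0 // /e expRK.
  have -> : (1 : R) *+ 3 = 3 by [].
  by [].
have lnb0 : 0 <= ln b by apply: ln_ge0.
have XLL : X * LL = alpha * t%:R * L.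
  by rewrite /X /Dn -/N -/L -/LL; field; lra.
have X0 : 0 <= X.
  rewrite /X /Dn -/N -/L -/LL mulr_ge0 // ?mulr_ge0 // ?divr_ge0 // ?invr_ge0; lra.
have XL : X <= L.
  have h1 : 0 <= (LL - t%:R) * (alpha * L) by rewrite mulr_ge0 // ?mulr_ge0; lra.
  have h2 : 0 <= (1 - alpha) * (L * LL) by rewrite mulr_ge0 // ?mulr_ge0; lra.
  nra.
have X12 : 12 * X <= (1 - alpha) * t%:R * L.
  have h1 : 0 <= ((1 - alpha) * LL - 12 * alpha) * (t%:R * L) by rewrite mulr_ge0 // ?mulr_ge0; lra.
  nra.
set beta := (1 - alpha) * t%:R.
have hA : X + 1 <= 2 * L by lra.
have hB : expR (X * ln b) <= expR (alpha * t%:R * L + beta * L / 4).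
  rewrite ler_expR /beta; nra.
have eXp0 : 0 <= e * X * p by rewrite mulr_ge0 // mulr_ge0 // ?expR_ge0.
have hC : (e * X * p) ^+ t <= (2 * e) ^+ t * L ^+ (2 * t) * expR (- (t%:R * L)).
  have h1 : e * X * p <= 2 * e * L ^+ 2 * expR (- L).
    have pb : p <= 2 * L * expR (- L).
      by rewrite pE expRN -NL ler_pdivrMr // divfK.
    have e0 : 0 < e by apply: expR_gt0.
    apply: (@le_trans _ _ (e * (L * (2 * L * expR (- L))))).
      rewrite -mulrA; apply: ler_wpM2l; first exact: ltW.
      by apply: ler_pM.
    by rewrite le_eqVlt; apply/orP; left; apply/eqP; ring.
  apply: (le_trans (lerXn2r t _ _ h1)); rewrite ?nnegrE //; last first.
    rewrite exprMn [(2 * e * _) ^+ t]exprMn -exprM -expRM_natl mulrN.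
    exact: le_refl.
  by rewrite !mulr_ge0 ?expR_ge0 ?exprn_ge0 //; lra.
have hD : 2 * L * L ^+ (2 * t) <= 2 * expR (beta * L / 4).
  rewrite -mulrA -exprS.
  have -> : L ^+ (2 * t).+1 = expR ((2 * t).+1%:R * LL) by rewrite expRM_natl /LL lnK // posrE.
  rewrite ler_pM2l // ler_expR.
  have sq := @ln_le_sqrt _ L0; rewrite -/LL in sq.
  have sL0 : 0 <= Num.sqrt L by apply: sqrtr_ge0.
  have sLL : Num.sqrt L * Num.sqrt L = L by rewrite -expr2 sqr_sqrtr // ltW.
  rewrite -addn1 natrD natrM /beta.
  have h1 : (2 * t%:R + 1) * LL <= (2 * t%:R + 1) * (2 * Num.sqrt L).
    by apply: ler_wpM2l => //; lra.
  have h2 : 8 * (2 * t%:R + 1) * Num.sqrt L <=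
      (1 - alpha) * t%:R * (Num.sqrt L * Num.sqrt L).
    by rewrite mulrA; exact: (ler_wpM2r sL0 C6).
  rewrite sLL in h2.
  lra.
set E1 := expR (alpha * t%:R * L + beta * L / 4).
set E2 := expR (- (t%:R * L)).
apply: (@le_trans _ _ (2 * L * (E1 * ((2 * e) ^+ t * L ^+ (2 * t) * E2)))).
  apply: ler_pM => //.
  - lra.
  - by rewrite mulr_ge0 ?expR_ge0 // exprn_ge0.
  by apply: ler_pM => //; exact: exprn_ge0.
apply: (@le_trans _ _ ((2 * L * L ^+ (2 * t)) * ((2 * e) ^+ t * (E1 * E2)))).
  by rewrite le_eqVlt; apply/orP; left; apply/eqP; ring.
apply: (@le_trans _ _ ((2 * expR (beta * L / 4)) * ((2 * e) ^+ t * (E1 * E2)))).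
  apply: ler_wpM2r => //.
  by rewrite mulr_ge0 ?exprn_ge0 ?mulr_ge0 ?expR_ge0 //; lra.
rewrite /E1 /E2 -!expRD.
have -> : alpha * t%:R * L + beta * L / 4 - t%:R * L = - (beta / 2 * L) - beta * L / 4.
  by rewrite /beta; field.
rewrite expRD !expRN.
have ne : expR (beta * L / 4) != 0 by rewrite gt_eqF // expR_gt0.
have ne2 : expR (beta / 2 * L) != 0 by rewrite gt_eqF // expR_gt0.
rewrite le_eqVlt; apply/orP; left; apply/eqP; field.
by rewrite ne ne2.
Qed.
End Asym.

Lemma ge_ln (R : realType) (Y x : R) : expR Y <= x -> Y <= ln x.
Proof.
move=> H; have x0 : 0 < x by apply: lt_le_trans H; exact: expR_gt0.
by rewrite -(expRK Y) ler_ln // posrE expR_gt0.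
Qed.

Lemma ev_L (R : realType) (Y : R) : \forall n \near \oo, Y <= ln (n%:R : R).
Proof.
apply: filterS (nbhs_infty_ger (expR Y)) => n H.
exact: ge_ln.
Qed.

Lemma sqrt_ge (R : realType) (c L : R) : 0 <= c -> c ^+ 2 <= L -> c <= Num.sqrt L.
Proof.
move=> c0 H; apply: le_trans (ler_wsqrtr H).
by rewrite sqrtr_sqr ger0_norm.
Qed.

Theorem lemma5 (R : realType) (k t : nat) (alpha : R) :
  (1 <= k)%N -> (1 <= t)%N -> 0 < alpha -> alpha < 1 ->
  (fun n : nat => gnp_prob (p_k R k n) (@bad R alpha t n)) @ \oo --> (0 : R).
Proof.
move=> k1 t1 a0 a1.
apply/cvgrPdist_le => eps eps0.
set C0 : R := 2 * (2 * expR 1) ^+ t.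
set beta : R := (1 - alpha) * t%:R.
have tt0 : 1 <= t%:R :> R by rewrite ler1n.
have beta0 : 0 < beta by rewrite /beta mulr_gt0 //; lra.
have C00 : 0 < C0 by rewrite /C0 mulr_gt0 // exprn_gt0 // mulr_gt0 // expR_gt0.
set c6 : R := 8 * (2 * t%:R + 1) / beta.
have c60 : 0 <= c6 by rewrite /c6 divr_ge0 //; lra.
set c3 : R := 2 * (k.+1)%:R.
have c30 : 0 <= c3 by rewrite /c3 mulr_ge0 //; lra.
near=> n.
have Hn : (0 < n)%N by near: n; exact: nbhs_infty_ge 1.
have C1 : 4 <= ln (n%:R : R) by near: n; exact: ev_L.
have C2 : 1 <= ln (ln (n%:R : R)).
  have : expR 1 <= ln (n%:R : R) by near: n; exact: ev_L.
  exact: ge_ln.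
have C4 : t%:R <= ln (ln (n%:R : R)).
  have : expR t%:R <= ln (n%:R : R) by near: n; exact: ev_L.
  exact: ge_ln.
have C5' : 12 * alpha / (1 - alpha) <= ln (ln (n%:R : R)).
  have : expR (12 * alpha / (1 - alpha)) <= ln (n%:R : R) by near: n; exact: ev_L.
  exact: ge_ln.
have C5 : 12 * alpha <= (1 - alpha) * ln (ln (n%:R : R)).
  by rewrite [X in _ <= X]mulrC -ler_pdivrMr ?subr_gt0.
have s6 : c6 <= Num.sqrt (ln (n%:R : R)).
  apply: sqrt_ge => //; near: n; exact: ev_L.
have C6 : 8 * (2 * t%:R + 1) <= (1 - alpha) * t%:R * Num.sqrt (ln (n%:R : R)).
  by rewrite -/beta [X in _ <= X]mulrC -ler_pdivrMr.
have s3 : c3 <= Num.sqrt (ln (n%:R : R)).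
  apply: sqrt_ge => //; near: n; exact: ev_L.
have C3 : (k.+1)%:R * ln (ln (n%:R : R)) <= ln (n%:R : R).
  set L := ln (n%:R : R).
  have L0 : 0 < L by rewrite /L; lra.
  have sq := @ln_le_sqrt R L L0.
  have sL0 : 0 <= Num.sqrt L by apply: sqrtr_ge0.
  have sLL : Num.sqrt L * Num.sqrt L = L by rewrite -expr2 sqr_sqrtr // ltW.
  have k0 : 0 <= (k.+1)%:R :> R by [].
  have h1 : (k.+1)%:R * ln L <= (k.+1)%:R * (2 * Num.sqrt L) by apply: ler_wpM2l.
  have h2 : c3 * Num.sqrt L <= Num.sqrt L * Num.sqrt L by apply: ler_wpM2r.
  rewrite sLL /c3 in h2; lra.
have C7 : C0 * expR (- ((1 - alpha) * t%:R / 2 * ln (n%:R : R))) <= eps.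
  have : - (2 / beta) * ln (eps / C0) <= ln (n%:R : R) by near: n; exact: ev_L.
  move=> H.
  rewrite mulrC -ler_pdivlMr // -[eps / C0]lnK ?posrE ?divr_gt0 // ler_expR.
  have : - ln (eps / C0) <= beta / 2 * ln (n%:R : R).
    have := ler_wpM2l (_ : 0 <= beta / 2) H; rewrite mulrA.
    have -> : beta / 2 * - (2 / beta) = -1.
      by field; rewrite gt_eqF.
    rewrite mulN1r; apply; rewrite divr_ge0 //; lra.
  rewrite -/beta; lra.
have := @final_bound R k t n alpha Hn t1 a0 a1 C1 C2 C3 C4 C5 C6.
move=> /= [p0 p1 b1 Hb].
have g0 : 0 <= gnp_prob (p_k R k n) (@bad R alpha t n).
  rewrite /gnp_prob; apply: sumr_ge0 => G _.
  by rewrite mulr_ge0 // exprn_ge0 // subr_ge0.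
rewrite sub0r normrN ger0_norm //.
have X0 : 0 <= alpha * t%:R * Dn R n.
  by rewrite /Dn mulr_ge0 ?mulr_ge0 ?divr_ge0 ?invr_ge0 //; lra.
apply: le_trans (@comb_bound R n t (p_k R k n) _ p0 p1 t1 X0 b1) _.
apply: le_trans Hb _; exact: C7.
Unshelve. all: end_near.
Qed.
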